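(* Let $g:\mathbb{R}\to\mathbb{R}$ be even and $\pi$-periodic. Let $m,n$ be positive integers, $p=\gcd(m,n)$, $r=n/p$, $\mu=\pi/n$, and $h(x)=\prod_{j=0}^{r-1} g(x+jm\mu)$. For $l\in\{0,\dots,p-1\}$ let $\lambda_l(x)=\prod_{k=1}^{p-l} h\big(x+(k-1)\mu\big)$ and $\delta_l=(p-l-1)\mu$. Then for all $x\in\mathbb{R}$, $$\lambda_l(x-\delta_l)=h\big(x-(p-l-1)\mu\big)\,h\big(x-(p-l-2)\mu\big)\cdots h(x)\quad\text{and}\quad\lambda_l(x-\delta_l)=\lambda_l(-x).$$ *)

(* Defs.v *)
From Stdlib Require Import Reals Lra Lia Arith.
Open Scope R_scope.

Fixpoint prodR (n : nat) (f : nat -> R) : R :=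
  match n with
  | O => 1
  | S k => prodR k f * f k
  end.

Definition mu (n : nat) : R := PI / INR n.

Definition h_fun (g : R -> R) (m n : nat) (x : R) : R :=
  prodR (n / Nat.gcd m n) (fun j => g (x + INR j * INR m * mu n)).

Definition lambda_fun (g : R -> R) (m n l : nat) (x : R) : R :=
  prodR (Nat.gcd m n - l) (fun k => h_fun g m n (x + INR k * mu n)).

Definition delta (m n l : nat) : R := INR (Nat.gcd m n - l - 1) * mu n.

(* Main.v *)
Require Import Defs.
From Stdlib Require Import Reals Lra Lia Arith.
Open Scope R_scope.

Lemma prodR_ext n f f' : (forall i, (i < n)%nat -> f i = f' i) -> prodR n f = prodR n f'.
Proof.
  induction n; intros H; simpl; [reflexivity|].
  rewrite IHn by (intros; apply H; lia). rewrite H by lia. reflexivity.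
Qed.

Lemma prodR_shift n f : prodR (S n) f = f 0%nat * prodR n (fun j => f (S j)).
Proof.
  induction n; simpl in *. ring. rewrite IHn. ring.
Qed.

Lemma prodR_rev n f : prodR n f = prodR n (fun i => f (n - 1 - i)%nat).
Proof.
  induction n; [reflexivity|].
  rewrite (prodR_shift n (fun i => f (S n - 1 - i)%nat)). cbn [prodR]. rewrite IHn.
  replace (S n - 1 - 0)%nat with n by lia. rewrite Rmult_comm. f_equal.
  apply prodR_ext. intros i Hi. f_equal. lia.
Qed.

Lemma g_perk (g : R -> R) (g_per : forall x, g (x + PI) = g x) k z :
  g (z - INR k * PI) = g z.
Proof.
  induction k. simpl. f_equal; ring.
  rewrite <- IHk, <- (g_per (z - INR (S k) * PI)). rewrite S_INR. f_equal; ring.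
Qed.

Lemma h_even (g : R -> R)
  (g_even : forall x, g (- x) = g x)
  (g_per : forall x, g (x + PI) = g x)
  (m n : nat) (hm : (0 < m)%nat) (hn : (0 < n)%nat) y :
  h_fun g m n (- y) = h_fun g m n y.
Proof.
  unfold h_fun.
  assert (Hp : (Nat.gcd m n <> 0)%nat) by (intro E; apply Nat.gcd_eq_0 in E; lia).
  destruct (Nat.gcd_divide_l m n) as [a Ha].
  destruct (Nat.gcd_divide_r m n) as [b Hb].
  remember (Nat.gcd m n) as p eqn:Ep.
  assert (Hr : (n / p = b)%nat) by (rewrite Hb; apply Nat.div_mul; auto).
  rewrite Hr.
  assert (Hb0 : (b <> 0)%nat) by (intro; subst; lia).
  assert (Key : INR b * INR m * mu n = INR a * PI).
  { unfold mu. rewrite Hb, Ha, !mult_INR. field.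
    split; apply not_0_INR; auto. }
  destruct b as [|b]; [reflexivity|].
  rewrite !prodR_shift. f_equal.
  { rewrite <- g_even. f_equal. simpl. ring. }
  rewrite prodR_rev. apply prodR_ext. intros i Hi.
  rewrite <- g_even.
  rewrite <- (g_perk g g_per a (y + _)).
  f_equal. rewrite <- Key.
  rewrite !S_INR, (minus_INR (b-1) i), (minus_INR b 1) by lia. change (INR 1) with 1. ring.
Qed.

Theorem corollaryA6 (g : R -> R)
  (g_even : forall x, g (- x) = g x)
  (g_per : forall x, g (x + PI) = g x)
  (m n : nat) (hm : (0 < m)%nat) (hn : (0 < n)%nat)
  (l : nat) (hl : (l < Nat.gcd m n)%nat) :
  forall x : R,
    lambda_fun g m n l (x - delta m n l)
      = prodR (Nat.gcd m n - l)
          (fun i => h_fun g m n (x - INR (Nat.gcd m n - l - 1 - i) * mu n))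
    /\ lambda_fun g m n l (x - delta m n l) = lambda_fun g m n l (- x).
Proof.
  intros x.
  assert (P1 : lambda_fun g m n l (x - delta m n l)
      = prodR (Nat.gcd m n - l)
          (fun i => h_fun g m n (x - INR (Nat.gcd m n - l - 1 - i) * mu n))).
  { unfold lambda_fun, delta. apply prodR_ext. intros i Hi. f_equal.
    rewrite (minus_INR (Nat.gcd m n - l - 1) i) by lia. ring. }
  split; [exact P1|]. rewrite P1.
  unfold lambda_fun.
  rewrite prodR_rev. apply prodR_ext. intros i Hi.
  rewrite <- h_even by assumption. f_equal.
  replace (Nat.gcd m n - l - 1 - (Nat.gcd m n - l - 1 - i))%nat with i by lia. ring.
Qed.
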